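(* Let $G=(V,E)$ be a graph and $\mathbb{F}$ a field. Suppose there exist a proper coloring $c:V\to[m]$ of $G$ with locality $\ell$ and $m$ vectors in $\mathbb{F}^t$ such that every $\ell$ of them are linearly independent over $\mathbb{F}$. Then $\mathrm{minrk}_{\mathbb{F}}(\overline{G})\le t$.
   Context: $\overline{G}$ is the complement of $G$. The locality of a proper coloring is the maximum over vertices $v$ of the number of distinct colors on $\{v\}\cup N(v)$. For a graph $H$ on $[n]$, a matrix $M\in\mathbb{F}^{n\times n}$ represents $H$ if $M_{i,i}\ne0$ for all $i$ and $M_{i,j}=0$ for distinct non-adjacent $i,j$; $\mathrm{minrk}_{\mathbb{F}}(H)$ is the minimum rank of such a matrix. *)

(* Defs.v *)
From mathcomp Require Import all_boot all_order all_algebra.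
From Stdlib Require Import ClassicalEpsilon.
Set Implicit Arguments. Unset Strict Implicit. Unset Printing Implicit Defensive.
Import GRing.Theory.
Local Open Scope ring_scope.

Definition simple_graph (n : nat) (e : rel 'I_n) : Prop :=
  symmetric e /\ irreflexive e.

Definition compl_graph (n : nat) (e : rel 'I_n) : rel 'I_n :=
  fun i j => (i != j) && ~~ e i j.

Definition proper_coloring (n m : nat) (e : rel 'I_n) (c : 'I_n -> 'I_m) : Prop :=
  forall u v, e u v -> c u != c v.

Definition closed_nbhd (n : nat) (e : rel 'I_n) (v : 'I_n) : {set 'I_n} :=
  v |: [set u | e v u].

Definition locality (n m : nat) (e : rel 'I_n) (c : 'I_n -> 'I_m) : nat :=
  (\max_(v : 'I_n) #|c @: closed_nbhd e v|)%N.

Definition every_l_independent (F : fieldType) (t m l : nat)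
    (u : 'I_m -> 'rV[F]_t) : Prop :=
  forall S : {set 'I_m}, #|S| = l ->
    forall a : 'I_m -> F, \sum_(i in S) a i *: u i = 0 ->
      forall i, i \in S -> a i = 0.

Definition represents (F : fieldType) (n : nat) (H : rel 'I_n) (M : 'M[F]_n) : Prop :=
  (forall i, M i i != 0) /\ (forall i j, i != j -> ~~ H i j -> M i j = 0).

Definition has_rep_of_rank (F : fieldType) (n : nat) (H : rel 'I_n) (r : nat) : bool :=
  if excluded_middle_informative
       (exists M : 'M[F]_n, represents H M /\ \rank M = r) then true else false.

Lemma represents_exists (F : fieldType) (n : nat) (H : rel 'I_n) :
  exists r : nat, has_rep_of_rank F H r.
Proof.
exists (\rank (1%:M : 'M[F]_n)); rewrite /has_rep_of_rank.
case: excluded_middle_informative => // [[]]; exists 1%:M; split=> //; split.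
- by move=> i; rewrite mxE eqxx oner_eq0.
- by move=> i j /negbTE ij _; rewrite mxE ij.
Qed.

Definition minrk (F : fieldType) (n : nat) (H : rel 'I_n) : nat :=
  ex_minn (@represents_exists F n H).

(* Main.v *)
Require Import Defs.
From mathcomp Require Import all_boot all_order all_algebra.
From mathcomp Require Import zify.
From Stdlib Require Import ClassicalEpsilon.
Set Implicit Arguments. Unset Strict Implicit. Unset Printing Implicit Defensive.
Import GRing.Theory.
Local Open Scope ring_scope.

Lemma pad_set (m l : nat) (S0 : {set 'I_m}) :
  (#|S0| <= l)%N -> (l <= m)%N -> exists S : {set 'I_m}, S0 \subset S /\ #|S| = l.
Proof.
move=> h1 h2.
have : (l - #|S0| <= #|~: S0|)%N by rewrite cardsCs card_ord; lia.
move/card_geqP=> [s [us ss sub]].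
exists (S0 :|: [set:: s]); split; first exact: subsetUl.
rewrite cardsU.
have -> : S0 :&: [set:: s] = set0.
  apply/setP=> x; rewrite !inE; apply/negP=> /andP[a b].
  by move: (sub x b); rewrite inE a.
move/card_uniqP: us => us.
by rewrite cards0 subn0 cardsE us ss; lia.
Qed.

Lemma notin_span (F : fieldType) (t m l : nat) (u : 'I_m -> 'rV[F]_t)
  (T0 : {set 'I_m}) (k0 : 'I_m) :
  @every_l_independent F t m l u -> (l <= m)%N -> k0 \notin T0 ->
  (#|k0 |: T0| <= l)%N ->
  ~~ (u k0 <= \sum_(k in T0) <<u k>>)%MS.
Proof.
move=> hind hlm hk0 hc; apply/negP=> /sub_sums_genmxP [a ha].
have [S [sS cS]] := pad_set hc hlm.
pose b := fun k : 'I_m => if k == k0 then 1 else if k \in T0 then - (a k 0 0) else 0.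
have := hind S cS b.
have k0S : k0 \in S by apply: (subsetP sS); rewrite !inE eqxx.
suff -> : \sum_(i in S) b i *: u i = 0.
  by move=> /(_ erefl k0 k0S); rewrite /b eqxx => /eqP; rewrite oner_eq0.
rewrite (bigD1 k0) //= /b eqxx scale1r.
rewrite (bigID (fun k => k \in T0)) /=.
rewrite [X in _ + (_ + X)]big1; last first.
  by move=> k /andP[/andP[_ /negbTE ->] /negbTE ->]; rewrite scale0r.
rewrite addr0.
have -> : \sum_(i < m | (i \in S) && (i != k0) && (i \in T0))
   (if i == k0 then 1 else if i \in T0 then - a i 0 0 else 0) *: u i
   = - \sum_(i in T0) a i *m u i.
  rewrite -sumrN; apply: eq_big => k.
    case kT: (k \in T0); last by rewrite andbF.
    rewrite andbT (subsetP sS k) /=; last by rewrite !inE kT orbT.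
    by apply/negP=> /eqP ke; move: hk0; rewrite -ke kT.
  move=> /andP[/andP[_ /negbTE ->] ->].
  by rewrite scaleNr -mul_scalar_mx -mx11_scalar.
by rewrite -ha subrr.
Qed.

Theorem mainTheorem10 (F : fieldType) (n m l t : nat) (e : rel 'I_n)
  (c : 'I_n -> 'I_m) (u : 'I_m -> 'rV[F]_t) :
  simple_graph e ->
  proper_coloring e c ->
  locality e c = l ->
  @every_l_independent F t m l u ->
  (minrk F (compl_graph e) <= t)%N.
Proof.
move=> [esym eirr] hprop hloc hind.
have hlm : (l <= m)%N.
  rewrite -hloc /locality; apply/bigmax_leqP => v _.
  by rewrite -[X in (_ <= X)%N]card_ord max_card.
have hw : forall v, exists w : 'cV[F]_t,
    (u (c v) *m w) 0 0 != 0 /\ forall x, e v x -> u (c x) *m w = 0.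
  move=> v.
  pose T0 := c @: [set x | e v x].
  have hk0 : c v \notin T0.
    apply/imsetP => [[x]]; rewrite inE => hx hcx.
    by move: (hprop v x hx); rewrite hcx eqxx.
  have hc : (#|c v |: T0| <= l)%N.
    have -> : c v |: T0 = c @: closed_nbhd e v by rewrite /closed_nbhd imsetU1.
    rewrite -hloc /locality.
    exact: leq_bigmax.
  have := notin_span hind hlm hk0 hc.
  set U := (\sum_(k in T0) <<u k>>)%MS.
  rewrite submxE => hX.
  have : [exists j, (u (c v) *m cokermx U) 0 j != 0].
    apply: contraR hX => /existsPn h; apply/eqP/matrixP => i j.
    by rewrite (ord1 i) [RHS]mxE; apply/eqP; apply: negbNE (h j).
  move=> /existsP [j hj].
  exists (col j (cokermx U)); split.
    by rewrite colE mulmxA -colE mxE.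
  move=> x hx.
  have : (u (c x) <= U)%MS.
    rewrite (sumsmx_sup (c x)) ?genmxE //.
    by apply/imsetP; exists x; rewrite ?inE.
  by rewrite submxE => /eqP h0; rewrite colE mulmxA h0 mul0mx.
have [w hw'] := fin_all_exists hw.
pose W := \matrix_(i < n, k < t) w i k 0.
pose U' := \matrix_(k < t, j < n) u (c j) 0 k.
pose M := \matrix_(i < n, j < n) (u (c j) *m w i) 0 0.
have defM : M = W *m U'.
  apply/matrixP => i j; rewrite !mxE; apply: eq_bigr => k _.
  by rewrite !mxE mulrC.
have hrep : represents (compl_graph e) M.
  split.
    by move=> i; rewrite mxE; case: (hw' i).
  move=> i j hij; rewrite /compl_graph hij /= negbK => hij'.
  by rewrite mxE; case: (hw' i) => _ ->; rewrite // mxE.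
rewrite /minrk; case: ex_minnP => r _ hmin.
apply: leq_trans (hmin (\rank M) _) _.
  rewrite /has_rep_of_rank; case: excluded_middle_informative => // [[]].
  by exists M.
by rewrite defM; apply: leq_trans (mxrankM_maxl _ _) (rank_leq_col _).
Qed.
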